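(* Let $\mathcal{H}_A,\mathcal{H}_B$ be finite-dimensional Hilbert spaces with a fixed reference basis $\{|i\rangle_A\}_{i=1}^{d_A}$ of $\mathcal{H}_A$, and let $\rho_{AB}=\sum_{i,j}|i\rangle\langle j|_A\otimes\rho^B_{ij}$ be a state. If there exist unitaries $U^B_1,\dots,U^B_{d_A}$ on $\mathcal{H}_B$ (equivalently, a unitary $U_{AB}=\sum_i|i\rangle\langle i|_A\otimes U^B_i$) such that $U^B_i\rho^B_{ij}U^{B\dagger}_j=|\rho^B_{ij}|$ for all $i,j$, then $$C^{A|B}_{\max}(\rho_{AB})=\log\left(1+C^{A|B}_{l_1}(\rho_{AB})\right).$$
   Context: $|P|=\sqrt{P^\dagger P}$ and $\|P\|_{\mathrm{tr}}=\mathrm{Tr}|P|$. $D_{\max}(\rho\|\sigma)=\min\{\lambda\ge0:\rho\leq2^\lambda\sigma\}$. The set $\mathcal{IQ}$ consists of states $\sum_kp_k\sigma^A_k\otimes\tau^B_k$ with $\sigma^A_k$ diagonal in $\{|i\rangle_A\}$ and $\tau^B_k$ arbitrary states; $C^{A|B}_{\max}(\rho_{AB})=\min_{\sigma\in\mathcal{IQ}}D_{\max}(\rho_{AB}\|\sigma)$; $C^{A|B}_{l_1}(\rho_{AB})=\sum_{i\neq j}\|\rho^B_{ij}\|_{\mathrm{tr}}$. Logarithms are base 2. *)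

(* Defs.v *)
From HB Require Import structures.
From mathcomp Require Import all_boot all_order all_algebra.
From mathcomp Require Import all_classical all_reals all_analysis.
From mathcomp Require Import complex mxtens.
Set Implicit Arguments. Unset Strict Implicit. Unset Printing Implicit Defensive.
Import Order.TTheory GRing.Theory Num.Theory.
Local Open Scope ring_scope.
Local Open Scope classical_set_scope.

Section Quantum.
Variable R : realType.
Local Notation C := R[i].

Definition mxadj m n (P : 'M[C]_(m, n)) : 'M[C]_(n, m) :=
  (map_mx (@conjc R) P)^T.

(* positive semidefinite: <v|P|v> is a nonnegative real for all v
   (the order on R[i] is: 0 <= z iff z is real and nonnegative) *)
Definition psd n (P : 'M[C]_n) : Prop :=
  forall v : 'cV[C]_n, 0 <= (mxadj v *m P *m v) 0 0.

Definition loewner_le n (P Q : 'M[C]_n) : Prop := psd (Q - P).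

Definition density n (P : 'M[C]_n) : Prop := psd P /\ \tr P = 1.

Definition unitary n (U : 'M[C]_n) : Prop := U *m mxadj U = 1%:M.

(* |P| = sqrt(P^dagger P): the (unique) psd square root of P^dagger P *)
Definition is_mxabs n (P Q : 'M[C]_n) : Prop :=
  psd Q /\ Q *m Q = mxadj P *m P.
Definition mxabs n (P : 'M[C]_n) : 'M[C]_n := xget 0 (is_mxabs P).

Definition trnorm n (P : 'M[C]_n) : R := complex.Re (\tr (mxabs P)).

Definition log2 (x : R) : R := ln x / ln 2.

(* block rho^B_{ij} of rho_AB = sum_{ij} |i><j|_A (x) rho^B_{ij},
   with H_A (x) H_B indexed by mxtens_index (as in tensmx) *)
Definition block dA dB (rho : 'M[C]_(dA * dB)) (i j : 'I_dA) : 'M[C]_dB :=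
  \matrix_(k, l) rho (mxtens_index (i, k)) (mxtens_index (j, l)).

(* incoherent-quantum states:  sum_k p_k sigma^A_k (x) tau^B_k  with
   sigma^A_k diagonal states and tau^B_k states (finite convex combinations) *)
Definition IQ dA dB (sigma : 'M[C]_(dA * dB)) : Prop :=
  exists (K : nat) (p : 'I_K -> R) (sA : 'I_K -> 'M[C]_dA)
         (tB : 'I_K -> 'M[C]_dB),
    [/\ forall k, 0 <= p k,
        \sum_(k < K) p k = 1,
        forall k, density (sA k) /\ is_diag_mx (sA k),
        forall k, density (tB k) &
        sigma = \sum_(k < K) ((p k)%:C)%C *: (sA k *t tB k)].

(* D_max(rho||sigma) = min { l >= 0 : rho <= 2^l sigma }  (+oo if empty) *)
Definition Dmax n (rho sigma : 'M[C]_n) : \bar R :=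
  ereal_inf [set (l%:E)%E | l in
    [set l : R | 0 <= l /\ loewner_le rho (((powR 2 l)%:C)%C *: sigma)]].

Definition Cmax dA dB (rho : 'M[C]_(dA * dB)) : \bar R :=
  ereal_inf [set Dmax rho sigma | sigma in @IQ dA dB].

Definition Cl1 dA dB (rho : 'M[C]_(dA * dB)) : R :=
  \sum_(i < dA) \sum_(j < dA | i != j) trnorm (block rho i j).

End Quantum.

(* Main.v *)
Require Import Defs.
From HB Require Import structures.
From mathcomp Require Import all_boot all_order all_algebra.
From mathcomp Require Import all_classical all_reals all_analysis.
From mathcomp Require Import complex mxtens.
From mathcomp Require Import ring.
Import Order.TTheory GRing.Theory Num.Theory.
Local Open Scope ring_scope.
Set Implicit Arguments. Unset Strict Implicit. Unset Printing Implicit Defensive.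

Section Q.
Variable R : realType.
Local Notation C := R[i].
Local Notation cj := (@conjc R).

Lemma mxadjE m n (P : 'M[C]_(m, n)) i j : mxadj P i j = cj (P j i).
Proof. by rewrite /mxadj !mxE. Qed.

Lemma mxadjK m n (P : 'M[C]_(m, n)) : mxadj (mxadj P) = P.
Proof. by apply/matrixP => i j; rewrite !mxadjE conjcK. Qed.

Lemma mxadj_mul m n p (A : 'M[C]_(m, n)) (B : 'M[C]_(n, p)) :
  mxadj (A *m B) = mxadj B *m mxadj A.
Proof. by rewrite /mxadj map_mxM trmx_mul. Qed.

Lemma mxadjD m n (A B : 'M[C]_(m, n)) : mxadj (A + B) = mxadj A + mxadj B.
Proof. by apply/matrixP => i j; rewrite !(mxadjE, mxE) rmorphD. Qed.

Lemma mxadjB m n (A B : 'M[C]_(m, n)) : mxadj (A - B) = mxadj A - mxadj B.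
Proof. by apply/matrixP => i j; rewrite !(mxadjE, mxE) rmorphB. Qed.

Lemma mxadjZ m n c (A : 'M[C]_(m, n)) : mxadj (c *: A) = cj c *: mxadj A.
Proof. by apply/matrixP => i j; rewrite !(mxadjE, mxE) rmorphM. Qed.

Lemma mxadj1 n : mxadj (1%:M : 'M[C]_n) = 1%:M.
Proof.
by apply/matrixP => i j; rewrite mxadjE !mxE conjc_nat eq_sym.
Qed.

Lemma unitaryC n (U : 'M[C]_n) : unitary U -> mxadj U *m U = 1%:M.
Proof. by move=> /mulmx1C. Qed.

Definition bil n (u : 'cV[C]_n) (A : 'M[C]_n) (w : 'cV[C]_n) : C :=
  (mxadj u *m A *m w) 0 0.

Lemma bilE n u (A : 'M[C]_n) w :
  bil u A w = \sum_a \sum_b cj (u a 0) * A a b * w b 0.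
Proof.
rewrite /bil mxE; under eq_bigr do rewrite mxE big_distrl.
rewrite exchange_big; apply: eq_bigr => a _; apply: eq_bigr => b _.
by rewrite mxadjE.
Qed.

Lemma bilDl n u v (A : 'M[C]_n) w : bil (u + v) A w = bil u A w + bil v A w.
Proof. by rewrite /bil mxadjD !mulmxDl mxE. Qed.
Lemma bilDr n u v (A : 'M[C]_n) w : bil w A (u + v) = bil w A u + bil w A v.
Proof. by rewrite /bil mulmxDr mxE. Qed.
Lemma bilZl n c u (A : 'M[C]_n) w : bil (c *: u) A w = cj c * bil u A w.
Proof. by rewrite /bil mxadjZ -!scalemxAl mxE. Qed.
Lemma bilZr n c u (A : 'M[C]_n) w : bil w A (c *: u) = c * bil w A u.
Proof. by rewrite /bil -!scalemxAr mxE. Qed.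
Lemma bilBl n u v (A : 'M[C]_n) w : bil (u - v) A w = bil u A w - bil v A w.
Proof. by rewrite -scaleN1r bilDl bilZl rmorphN1 mulN1r. Qed.
Lemma bilBr n u v (A : 'M[C]_n) w : bil w A (u - v) = bil w A u - bil w A v.
Proof. by rewrite -scaleN1r bilDr bilZr mulN1r. Qed.
Lemma bilAD n u (A B : 'M[C]_n) w : bil u (A + B) w = bil u A w + bil u B w.
Proof. by rewrite /bil mulmxDr mulmxDl mxE. Qed.
Lemma bilAZ n c u (A : 'M[C]_n) w : bil u (c *: A) w = c * bil u A w.
Proof. by rewrite /bil -scalemxAr -scalemxAl mxE. Qed.
Lemma bilAB n u (A B : 'M[C]_n) w : bil u (A - B) w = bil u A w - bil u B w.
Proof. by rewrite -scaleN1r bilAD bilAZ mulN1r. Qed.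
Lemma bilA0 n u w : bil u (0 : 'M[C]_n) w = 0.
Proof. by rewrite /bil mulmx0 mul0mx mxE. Qed.

Lemma bil_delta n (A : 'M[C]_n) a b :
  bil (delta_mx a 0) A (delta_mx b 0) = A a b.
Proof.
rewrite bilE (bigD1 a) //= [X in _ + X]big1 ?addr0; last first.
  by move=> a' /negbTE na; rewrite big1 // => b' _; rewrite mxE na andFb conjc_nat !mul0r.
rewrite (bigD1 b) //= [X in _ + X]big1 ?addr0; last first.
  by move=> b' /negbTE nb; rewrite [delta_mx b 0 b' 0]mxE nb andFb mulr0.
by rewrite !mxE !eqxx andTb conjc_nat mul1r mulr1.
Qed.

Lemma psd_bil n (P : 'M[C]_n) : psd P <-> forall v, 0 <= bil v P v.
Proof. by []. Qed.

Lemma bil_adj n u (A : 'M[C]_n) w : bil u (mxadj A) w = cj (bil w A u).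
Proof.
rewrite !bilE rmorph_sum exchange_big /=; apply: eq_bigr => a _.
rewrite rmorph_sum; apply: eq_bigr => b _.
by rewrite !rmorphM mxadjE /= conjcK mulrC mulrA mulrAC.
Qed.

Lemma bil0_eq0 n (A : 'M[C]_n) : (forall v, bil v A v = 0) -> A = 0.
Proof.
move=> H; apply/matrixP => a b; rewrite mxE.
have Haa : forall c, A c c = 0 by move=> c; rewrite -bil_delta H.
set ea := delta_mx a 0 : 'cV[C]_n; set eb := delta_mx b 0 : 'cV[C]_n.
have E c : bil (ea + c *: eb) A (ea + c *: eb) = c * A a b + cj c * A b a.
  rewrite !(bilDl, bilDr, bilZl, bilZr) !bil_delta !Haa.
  by rewrite !(mulr0, addr0, add0r) addrC.
have E1 := E 1; have Ei := E 'i%C.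
rewrite H conjc1 !mul1r in E1; rewrite H in Ei.
rewrite (_ : cj 'i%C = - 'i%C) // in Ei.
have Ei' : 'i%C * (A a b - A b a) = 0 by rewrite [RHS]Ei mulrBr mulNr.
have : A b a = A a b.
  move/eqP: Ei'; rewrite mulf_eq0 => /orP[]; first by move/eqP; case => /eqP; rewrite oner_eq0.
  by rewrite subr_eq0 => /eqP.
move=> Hba; move: E1; rewrite Hba => /eqP; rewrite eq_sym -mulr2n.
  by rewrite -mulr_natr mulf_eq0 pnatr_eq0 orbF => /eqP.
by apply/eqP; rewrite eq_complex /= oppr0 !eqxx.
Qed.


Lemma bil_two n (A : 'M[C]_n) a b c :
  bil (delta_mx a 0 + c *: delta_mx b 0) A (delta_mx a 0 + c *: delta_mx b 0)
  = A a a + c * A a b + cj c * A b a + cj c * c * A b b.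
Proof.
by rewrite !(bilDl, bilDr, bilZl, bilZr) !bil_delta mulrDr mulrA !addrA.
Qed.

Lemma real_conj (z : C) : 0 <= z -> cj z = z.
Proof.
move=> z0; have zr : z \is Num.real by apply: ger0_real.
by rewrite -(RRe_real zr) conjc_real.
Qed.

Lemma psd_herm n (P : 'M[C]_n) : psd P -> mxadj P = P.
Proof.
move=> HP; apply/eqP; rewrite eq_sym -subr_eq0; apply/eqP; apply: bil0_eq0 => v.
by rewrite bilAB bil_adj real_conj ?subrr //; apply: HP.
Qed.

Lemma psd_diag n (P : 'M[C]_n) a : psd P -> 0 <= P a a.
Proof. by move=> HP; rewrite -bil_delta; apply: HP. Qed.

Lemma psd_tr_ge0 n (P : 'M[C]_n) : psd P -> 0 <= \tr P.
Proof. by move=> HP; apply: sumr_ge0 => a _; apply: psd_diag. Qed.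

Lemma psd_tr0 n (P : 'M[C]_n) : psd P -> \tr P = 0 -> P = 0.
Proof.
move=> HP /eqP; rewrite psumr_eq0; last by move=> a _; apply: psd_diag.
move=> /allP Hd.
have Hdi a : P a a = 0 by apply/eqP; apply: Hd; rewrite mem_index_enum.
have Hh := psd_herm HP.
apply/matrixP => b a; rewrite mxE.
have : 0 <= bil (delta_mx a 0 + (- P b a) *: delta_mx b 0) P
   (delta_mx a 0 + (- P b a) *: delta_mx b 0) := HP _.
rewrite bil_two !Hdi !mulr0 addr0 add0r.
have -> : P a b = cj (P b a) by rewrite -{1}Hh mxadjE.
rewrite rmorphN /= !mulNr -opprD [X in _ + X]mulrC -mulr2n oppr_ge0 => H.
have H0 : 0 <= P b a * cj (P b a) by apply: mulcJ_ge0.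
have : P b a * cj (P b a) = 0.
  apply/eqP; rewrite eq_le H0 andbT.
  by apply: le_trans H; rewrite mulr2n lerDl.
by move/eqP; rewrite mulf_eq0 conjc_eq0 orbb => /eqP.
Qed.

Lemma psd0 n : psd (0 : 'M[C]_n).
Proof. by move=> v; rewrite -/(bil v 0 v) bilA0. Qed.

Lemma psdD n (A B : 'M[C]_n) : psd A -> psd B -> psd (A + B).
Proof. by move=> HA HB v; rewrite -/(bil v _ v) bilAD addr_ge0 //; [apply: HA|apply: HB]. Qed.

Lemma psdZ n c (A : 'M[C]_n) : 0 <= c -> psd A -> psd (c *: A).
Proof. by move=> c0 HA v; rewrite -/(bil v _ v) bilAZ mulr_ge0 //; apply: HA. Qed.

Lemma psd_sum n I (r : seq I) (F : I -> 'M[C]_n) :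
  (forall i, psd (F i)) -> psd (\sum_(i <- r) F i).
Proof.
move=> HF; elim: r => [|x r IH]; first by rewrite big_nil; apply: psd0.
by rewrite big_cons; apply: psdD.
Qed.

Lemma bil_conj n m (X : 'M[C]_(n, m)) (P : 'M[C]_n) v w :
  bil v (mxadj X *m P *m X) w = bil (X *m v) P (X *m w).
Proof. by rewrite /bil mxadj_mul !mulmxA. Qed.

Lemma psd_conj n m (X : 'M[C]_(n, m)) (P : 'M[C]_n) :
  psd P -> psd (mxadj X *m P *m X).
Proof. by move=> HP v; rewrite -/(bil v _ v) bil_conj; apply: HP. Qed.

Lemma psd1 n : psd (1%:M : 'M[C]_n).
Proof.
move=> v; rewrite -/(bil v _ v) /bil mulmx1 mxE; apply: sumr_ge0 => a _.
by rewrite mxadjE mulrC mulcJ_ge0.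
Qed.

Lemma mxadj_delta m n (i : 'I_m) (j : 'I_n) : mxadj (delta_mx i j) = delta_mx j i :> 'M[C]__.
Proof. by apply/matrixP => a b; rewrite mxadjE !mxE conjc_nat andbC. Qed.

Lemma psd_delta n (i : 'I_n) : psd (delta_mx i i : 'M[C]_n).
Proof.
have -> : delta_mx i i = mxadj (delta_mx 0 i : 'M[C]_(1, n)) *m 1%:M *m delta_mx 0 i.
  by rewrite mulmx1 mxadj_delta mul_delta_mx.
by apply/psd_conj/psd1.
Qed.


Lemma sum_tens m n (F : 'I_(m * n) -> C) :
  \sum_a F a = \sum_(i < m) \sum_(k < n) F (mxtens_index (i, k)).
Proof.
rewrite pair_big /= (reindex (@mxtens_index m n)) /=; last first.
  by exists (@mxtens_unindex m n) => x _; rewrite (mxtens_indexK, mxtens_unindexK).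
by apply: eq_bigr => -[i k] _.
Qed.

Definition vb m n (v : 'cV[C]_(m * n)) (i : 'I_m) : 'cV[C]_n :=
  \col_k v (mxtens_index (i, k)) 0.

Definition vec m n (w : 'I_m -> 'cV[C]_n) : 'cV[C]_(m * n) :=
  \col_a w (mxtens_unindex a).1 (mxtens_unindex a).2 0.

Lemma vb_vec m n (w : 'I_m -> 'cV[C]_n) i : vb (vec w) i = w i.
Proof. by apply/matrixP => k z; rewrite !mxE mxtens_indexK (ord1 z). Qed.

Lemma bil_block m n u (X : 'M[C]_(m * n)) w :
  bil u X w = \sum_i \sum_j bil (vb u i) (block X i j) (vb w j).
Proof.
rewrite bilE; under eq_bigr => a _ do rewrite sum_tens.
rewrite sum_tens; apply: eq_bigr => i _.
under [RHS]eq_bigr => j _ do rewrite bilE.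
rewrite exchange_big; apply: eq_bigr => j _; apply: eq_bigr => k _.
by apply: eq_bigr => l _; rewrite !mxE.
Qed.

Lemma block_tens_sum m n K (c : 'I_K -> C) (A : 'I_K -> 'M[C]_m)
   (B : 'I_K -> 'M[C]_n) i j :
  block (\sum_(p < K) c p *: (A p *t B p)) i j = \sum_(p < K) (c p * A p i j) *: B p.
Proof.
apply/matrixP => k l; rewrite mxE !summxE; apply: eq_bigr => p _.
by rewrite !mxE !mxtens_indexK mulrA.
Qed.

Lemma tr_block m n (X : 'M[C]_(m * n)) : \tr X = \sum_i \tr (block X i i).
Proof. by rewrite /mxtrace sum_tens; apply: eq_bigr => i _; apply: eq_bigr => k _; rewrite mxE. Qed.

Lemma tr_tens m n (A : 'M[C]_m) (B : 'M[C]_n) : \tr (A *t B) = \tr A * \tr B.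
Proof. by rewrite /mxtrace mulr_sum; apply: eq_bigr => a _; rewrite mxE. Qed.

Lemma bil_adjmul n (X Y B : 'M[C]_n) u :
  bil (mxadj X *m u) B (mxadj Y *m u) = bil u (X *m B *m mxadj Y) u.
Proof. by rewrite /bil mxadj_mul mxadjK !mulmxA. Qed.

Lemma key dA dB (U : 'I_dA -> 'M[C]_dB) (X : 'M[C]_(dA * dB)) :
  \sum_k bil (vec (fun i => mxadj (U i) *m delta_mx k 0)) X
             (vec (fun i => mxadj (U i) *m delta_mx k 0))
  = \sum_i \sum_j \tr (U i *m block X i j *m mxadj (U j)).
Proof.
under eq_bigr => k _ do rewrite bil_block.
under eq_bigr => k _ do under eq_bigr => i _ do under eq_bigr => j _ do
  rewrite !vb_vec bil_adjmul bil_delta.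
rewrite exchange_big; apply: eq_bigr => i _.
by rewrite exchange_big.
Qed.

Lemma lower dA dB (rho : 'M[C]_(dA * dB)) (U : 'I_dA -> 'M[C]_dB)
   (M : 'I_dA -> 'I_dA -> 'M[C]_dB) :
  (forall i, unitary (U i)) ->
  (forall i j, U i *m block rho i j *m mxadj (U j) = M i j) ->
  forall sigma, IQ sigma -> forall c : R, psd ((c%:C)%C *: sigma - rho) ->
  \sum_i \sum_j complex.Re (\tr (M i j)) <= c.
Proof.
move=> HU HM sigma [K [p [sA [tB [p0 p1 HA HB Hsig]]]]] c Hpsd.
set v := fun k : 'I_dB => vec (fun i => mxadj (U i) *m delta_mx k 0).
have H0 : 0 <= \sum_k bil (v k) ((c%:C)%C *: sigma - rho) (v k).
  by apply: sumr_ge0 => k _; apply: Hpsd.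
rewrite (eq_bigr (fun k => (c%:C)%C * bil (v k) sigma (v k) - bil (v k) rho (v k))) in H0;
  last by move=> k _; rewrite bilAB bilAZ.
rewrite sumrB -mulr_sumr !key in H0.
have Hs : \sum_i \sum_j \tr (U i *m block sigma i j *m mxadj (U j)) = 1.
  have Hb i j : block sigma i j = \sum_(k < K) (((p k)%:C)%C * sA k i j) *: tB k.
    by rewrite Hsig block_tens_sum.
  transitivity (\sum_i \tr (block sigma i i)).
    apply: eq_bigr => i _; rewrite (bigD1 i) //= big1 ?addr0.
      by rewrite mxtrace_mulC mulmxA unitaryC // mul1mx.
    move=> j ji; rewrite Hb big1 ?mulmx0 ?mul0mx ?mxtrace0 // => k _.
    by have /is_diag_mxP -> := (HA k).2; rewrite ?mulr0 ?scale0r // eq_sym.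
  rewrite -tr_block Hsig raddf_sum /=.
  under eq_bigr => k _ do rewrite mxtraceZ tr_tens (HA k).1.2 (HB k).2 mulr1.
  under eq_bigr => k _ do rewrite mulr1.
  have -> : \sum_(k < K) ((p k)%:C)%C = ((\sum_(k < K) p k)%:C)%C by rewrite rmorph_sum.
  by rewrite p1.
rewrite Hs mulr1 in H0.
under eq_bigr => i _ do under eq_bigr => j _ do rewrite -HM.
move: H0; rewrite lecE => /andP[_]; rewrite raddfB /= subr_ge0.
rewrite raddf_sum => H; apply: (le_trans _ H); apply: ler_sum => i _; by rewrite raddf_sum.
Qed.

Lemma bil_conj2 n m (X Y : 'M[C]_(n, m)) (P : 'M[C]_n) v w :
  bil v (mxadj X *m P *m Y) w = bil (X *m v) P (Y *m w).
Proof. by rewrite /bil mxadj_mul !mulmxA. Qed.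

Lemma bil_sumA n I (r : seq I) (F : I -> 'M[C]_n) u w :
  bil u (\sum_(i <- r) F i) w = \sum_(i <- r) bil u (F i) w.
Proof.
elim: r => [|x r IH]; first by rewrite !big_nil bilA0.
by rewrite !big_cons bilAD IH.
Qed.

Lemma tr_delta n (i : 'I_n) : \tr (delta_mx i i : 'M[C]_n) = 1.
Proof.
rewrite /mxtrace (bigD1 i) //= big1 ?addr0; first by rewrite mxE !eqxx.
by move=> j /negbTE ji; rewrite mxE ji.
Qed.

Lemma diag_delta n (i : 'I_n) : is_diag_mx (delta_mx i i : 'M[C]_n).
Proof.
apply/is_diag_mxP => a b ab; rewrite mxE.
case: (eqVneq a i) => [ai|//]; case: (eqVneq b i) => [bi|]; last by rewrite andbF.
by move: ab; rewrite ai bi eqxx.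
Qed.

Lemma tr_real n (P : 'M[C]_n) : psd P -> \tr P = ((complex.Re (\tr P))%:C)%C.
Proof. by move=> HP; rewrite RRe_real // ger0_real // psd_tr_ge0. Qed.

Lemma Re_ge0 (z : C) : 0 <= z -> 0 <= complex.Re z.
Proof. by rewrite lecE => /andP[]. Qed.

Lemma sym_sum dA n (M : 'I_dA -> 'I_dA -> 'M[C]_n) (u : 'I_dA -> 'cV[C]_n) :
  (forall i j, psd (M i j)) -> (forall i j, M j i = M i j) ->
  0 <= \sum_i \sum_j bil (u i) (M i j) (u i) - \sum_i \sum_j bil (u i) (M i j) (u j).
Proof.
move=> Hp Hs.
set a := \sum_i \sum_j bil (u i) (M i j) (u i).
set b := \sum_i \sum_j bil (u i) (M i j) (u j).
have E : \sum_i \sum_j bil (u i - u j) (M i j) (u i - u j) = (a - b) *+ 2.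
  have E1 i j : bil (u i - u j) (M i j) (u i - u j) =
      (bil (u i) (M i j) (u i) - bil (u i) (M i j) (u j)) +
      (bil (u j) (M i j) (u j) - bil (u j) (M i j) (u i)).
    rewrite !(bilBl, bilBr); ring.
  under eq_bigr => i _ do under eq_bigr => j _ do rewrite E1.
  under eq_bigr => i _ do rewrite big_split /=.
  rewrite big_split /=.
  have -> : \sum_i \sum_j (bil (u j) (M i j) (u j) - bil (u j) (M i j) (u i)) =
            \sum_i \sum_j (bil (u i) (M i j) (u i) - bil (u i) (M i j) (u j)).
    rewrite exchange_big; apply: eq_bigr => i _; apply: eq_bigr => j _.
    by rewrite Hs.
  under eq_bigr => i _ do rewrite sumrB.
  by rewrite sumrB mulr2n.
have : 0 <= (a - b) *+ 2.
  rewrite -E; apply: sumr_ge0 => i _; apply: sumr_ge0 => j _; apply: Hp.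
by rewrite pmulrn_lge0.
Qed.

Lemma upper dA dB (rho : 'M[C]_(dA * dB)) (U : 'I_dA -> 'M[C]_dB)
   (M : 'I_dA -> 'I_dA -> 'M[C]_dB) (i0 : 'I_dB) :
  (forall i, unitary (U i)) ->
  (forall i j, U i *m block rho i j *m mxadj (U j) = M i j) ->
  (forall i j, psd (M i j)) ->
  (forall i j, M j i = M i j) ->
  0 < \sum_i \sum_j complex.Re (\tr (M i j)) ->
  exists sigma, IQ sigma /\
    psd ((\sum_i \sum_j complex.Re (\tr (M i j)))%:C%C *: sigma - rho).
Proof.
move=> HU HM HMp HMs.
set lam := \sum_i \sum_j complex.Re (\tr (M i j)) => lam0.
pose D i := \sum_j M i j.
pose E i := mxadj (U i) *m D i *m U i.
have HE i : psd (E i) by apply/psd_conj/psd_sum.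
pose t i := complex.Re (\tr (E i)).
have t0 i : 0 <= t i by apply/Re_ge0/psd_tr_ge0.
have trE i : \tr (E i) = ((t i)%:C)%C by apply: tr_real.
have tD i : \tr (E i) = \tr (D i).
  by rewrite mxtrace_mulC mulmxA HU mul1mx.
have tsum : \sum_i t i = lam.
  apply: eq_bigr => i _; rewrite /t tD.
  have -> : \tr (D i) = \sum_j \tr (M i j) by apply: raddf_sum.
  by rewrite raddf_sum.
pose tB i := if t i == 0 then delta_mx i0 i0 else ((t i)^-1)%:C%C *: E i.
have HtB i : ((t i)%:C)%C *: tB i = E i.
  rewrite /tB; case: eqP => [tz|tn0].
    by rewrite tz scale0r; symmetry; apply: psd_tr0 => //; rewrite trE tz.
  by rewrite scalerA -rmorphM /= divff ?rmorph1 ?scale1r //; apply/eqP.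
pose p i := t i / lam.
exists (\sum_i ((p i)%:C)%C *: (delta_mx i i *t tB i)); split.
  exists dA, p, (fun i => delta_mx i i), tB; split.
  - by move=> i; rewrite /p divr_ge0 // ltW.
  - by rewrite /p -mulr_suml tsum divff // gt_eqF.
  - by move=> i; split; [split; [apply: psd_delta|apply: tr_delta]|apply: diag_delta].
  - move=> i; rewrite /tB; case: eqP => [_|tn0]; first by split; [apply: psd_delta|apply: tr_delta].
    split; first by apply: psdZ => //; rewrite ler0c invr_ge0.
    by rewrite mxtraceZ trE -rmorphM /= mulVf ?rmorph1 //; apply/eqP.
  - by [].
set sigma := \sum_i _.
have Hbs i j : block sigma i j = if j == i then ((p i)%:C)%C *: tB i else 0.
  rewrite block_tens_sum (bigD1 i) //= big1 ?addr0 => [|k ki].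
    by rewrite mxE eqxx; case: eqP => _; rewrite ?mulr1 ?mulr0 ?scale0r.
  by rewrite mxE eq_sym (negbTE ki) mulr0 scale0r.
move=> v; rewrite -/(bil v _ v) bilAB bilAZ !bil_block.
have -> : \sum_i \sum_j bil (vb v i) (block sigma i j) (vb v j) =
          \sum_i bil (vb v i) (((p i)%:C)%C *: tB i) (vb v i).
  apply: eq_bigr => i _; rewrite (bigD1 i) //= big1 ?addr0 ?Hbs ?eqxx //.
  by move=> j /negbTE ji; rewrite Hbs ji bilA0.
rewrite mulr_sumr.
have -> : \sum_i (lam%:C)%C * bil (vb v i) (((p i)%:C)%C *: tB i) (vb v i) =
    \sum_i \sum_j bil (U i *m vb v i) (M i j) (U i *m vb v i).
  apply: eq_bigr => i _; rewrite -bilAZ scalerA -rmorphM /= /p mulrC divfK ?gt_eqF //.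
  by rewrite HtB bil_conj2 bil_sumA.
have -> : \sum_i \sum_j bil (vb v i) (block rho i j) (vb v j) =
    \sum_i \sum_j bil (U i *m vb v i) (M i j) (U j *m vb v j).
  apply: eq_bigr => i _; apply: eq_bigr => j _; rewrite -bil_conj2 -HM.
  by rewrite !mulmxA unitaryC // mul1mx -mulmxA unitaryC // mulmx1.
exact: sym_sum.
Qed.

End Q.

Unset Implicit Arguments.
Set Strict Implicit.

Theorem proposition9 (R : realType) (dA dB : nat)
    (rho : 'M[R[i]]_(dA * dB)) (U : 'I_dA -> 'M[R[i]]_dB) :
  density rho ->
  (forall i, unitary (U i)) ->
  (forall i j, U i *m block rho i j *m mxadj (U j) = mxabs (block rho i j)) ->
  Cmax rho = ((log2 (1 + Cl1 rho))%:E)%E.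
Proof.
move=> [Hpsd Htr] HU HM.
set M := fun i j => mxabs (block rho i j).
have HM' i j : U i *m block rho i j *m mxadj (U j) = M i j := HM i j.
have HMp i j : psd (M i j).
  rewrite /M /mxabs; case: (pselect (exists Q, is_mxabs (block rho i j) Q)).
    by move=> ex; have [] := xgetPex 0 ex.
  move=> nex; rewrite xgetPN; first exact: psd0.
  by move=> Q HQ; apply: nex; exists Q.
have Hherm := psd_herm Hpsd.
have Hbadj i j : block rho j i = mxadj (block rho i j).
  by apply/matrixP => k l; rewrite mxadjE !mxE -[in LHS]Hherm mxadjE.
have HMs i j : M j i = M i j.
  rewrite -HM' Hbadj -(psd_herm (HMp i j)) -HM' !mxadj_mul mxadjK.
  by rewrite !mulmxA.
have Hdiag : \sum_i \tr (M i i) = 1.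
  rewrite -Htr tr_block; apply: eq_bigr => i _.
  by rewrite -HM' mxtrace_mulC mulmxA unitaryC // mul1mx.
set lam := \sum_i \sum_j complex.Re (\tr (M i j)).
have Hlam : lam = 1 + Cl1 rho.
  rewrite /lam; under eq_bigr => i _ do rewrite (bigD1 i) //=.
  rewrite big_split -raddf_sum Hdiag; congr (_ + _).
  apply: eq_bigr => i _; apply: eq_bigl => j; by rewrite eq_sym.
have Cl0 : 0 <= Cl1 rho.
  apply: sumr_ge0 => i _; apply: sumr_ge0 => j _.
  exact/Re_ge0/psd_tr_ge0/(HMp i j).
have lam1 : 1 <= lam by rewrite Hlam lerDl.
have lam0 : 0 < lam by rewrite Hlam; apply: (lt_le_trans ltr01); rewrite lerDl.
have [i0 _] : exists i0 : 'I_dB, true.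
  case: (pickP (fun _ : 'I_(dA * dB) => true)) => [a _|H0].
    by exists (mxtens_unindex a).2.
  by move: Htr; rewrite /mxtrace big_pred0 // => /eqP; rewrite eq_sym oner_eq0.
have [s0 [Hs0 Hps0]] := upper i0 HU HM' HMp HMs lam0.
have ln2 : 0 < ln (2 : R) by rewrite ln_gt0 // ltr1n.
have Hpow : powR 2 (log2 lam) = lam.
  rewrite /powR pnatr_eq0 /log2 divfK ?gt_eqF //.
  by rewrite lnK // posrE.
rewrite -Hlam; apply/eqP; rewrite eq_le; apply/andP; split.
  apply: ge_ereal_inf; exists (Dmax rho s0); first by exists s0.
  apply: ge_ereal_inf; exists ((log2 lam)%:E)%E; last exact: le_refl.
  exists (log2 lam); last by []. split; last by rewrite /loewner_le Hpow.
  apply: divr_ge0; last exact: ltW.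
  exact: ln_ge0.
apply/ereal_infP => y [s Hs <-].
apply/ereal_infP => z [l [l0 Hl] <-].
rewrite lee_fin.
have := lower HU HM' Hs Hl => Hle.
rewrite /log2 ler_pdivrMr // -ln_powR ler_ln // ?posrE ?powR_gt0 //.
Qed.
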